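(* Let $s>1$. There exists a function $f:\mathbb{R}\to\mathbb{C}$ such that $f\in C_{ap}(\mathbb{R})\cap G^s(\mathbb{R})$, but for no constants $B,C>0$ does the estimate $$\sup_{x\in\mathbb{R}}|f^{(j)}(x)|\le B\,C^{j}(j!)^s\quad\text{for all } j=0,1,2,\dots$$ hold.
   Context: $C_{ap}(\mathbb{R})$ denotes the space of (Bohr) uniformly almost periodic functions on $\mathbb{R}$, i.e. the closure in the supremum norm of the trigonometric polynomials $\sum_{\xi}a_\xi e^{2\pi i \xi x}$ (finite sums, $a_\xi\in\mathbb{C}$, $\xi\in\mathbb{R}$). For $s\ge1$ and an open set $\Omega\subseteq\mathbb{R}^d$, the Gevrey space $G^s(\Omega)$ is the set of $f\in C^\infty(\Omega)$ such that for every compact $K\subseteq\Omega$ there is $C_K>0$ with $\sup_{x\in K}|\partial^\alpha f(x)|\le C_K^{1+|\alpha|}(\alpha!)^s$ for all $\alpha\in\mathbb{N}^d$. *)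

(* Defs.v *)
(* classical reals. A complex-valued function f = u + i v is
   represented by its real and imaginary parts u, v : R -> R. *)
From Stdlib Require Import Reals List Factorial.
Open Scope R_scope.

Definition cmod (a b : R) : R := sqrt (a ^ 2 + b ^ 2).

Definition derivs_of (f : R -> R) (D : nat -> R -> R) : Prop :=
  (forall x, D 0%nat x = f x) /\
  (forall (j : nat) (x : R), derivable_pt_lim (D j) x (D (S j) x)).

(* Trigonometric polynomial  sum_k (p_k + i q_k) e^{2 pi i xi_k x},
   list entries are (xi_k, p_k, q_k); real and imaginary parts. *)
Definition trig_re (l : list (R * R * R)) (x : R) : R :=
  fold_right (fun '(xi, p, q) acc =>
    p * cos (2 * PI * xi * x) - q * sin (2 * PI * xi * x) + acc) 0 l.
Definition trig_im (l : list (R * R * R)) (x : R) : R :=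
  fold_right (fun '(xi, p, q) acc =>
    p * sin (2 * PI * xi * x) + q * cos (2 * PI * xi * x) + acc) 0 l.

Definition almost_periodic (u v : R -> R) : Prop :=
  forall eps, eps > 0 -> exists l : list (R * R * R),
    forall x, cmod (u x - trig_re l x) (v x - trig_im l x) <= eps.

Definition gevrey (s : R) (Du Dv : nat -> R -> R) : Prop :=
  forall K : R -> Prop, compact K ->
    exists CK, CK > 0 /\
      forall (j : nat) (x : R), K x ->
        cmod (Du j x) (Dv j x) <= CK ^ (S j) * Rpower (INR (fact j)) s.

(* Main.v *)
Require Import Defs.
From Stdlib Require Import Reals List Factorial Lra Lia.
Open Scope R_scope.

Definition Lnat (n : nat) : nat := S (16 ^ n).
Definition lam (n : nat) : R := 16 ^ n.
Definition LR (n : nat) : R := INR (Lnat n).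

Lemma LR_eq n : LR n = lam n + 1.
Proof. unfold LR, Lnat, lam. rewrite S_INR, pow_INR. simpl INR. f_equal. f_equal. ring. Qed.

Lemma lam_ge1 n : 1 <= lam n.
Proof. unfold lam. induction n; simpl; lra. Qed.

Lemma LR_ge1 n : 1 <= LR n.
Proof. rewrite LR_eq; pose proof (lam_ge1 n); lra. Qed.

Lemma LL_ge n : LR n <= LR n ^ Lnat n.
Proof.
  change (LR n ^ Lnat n) with (LR n * LR n ^ (16 ^ n)). pose proof (LR_ge1 n).
  assert (1 <= LR n ^ (16 ^ n)) by (apply pow_R1_Rle; lra). nra.
Qed.

Fixpoint eps (n : nat) : R :=
  match n with
  | O => / (LR 0 ^ Lnat 0)
  | S k => eps k / (8 * LR (S k) ^ Lnat (S k))
  end.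

Lemma LLpos n : 1 <= LR n ^ Lnat n.
Proof. apply pow_R1_Rle, LR_ge1. Qed.

Lemma eps_pos n : 0 < eps n.
Proof.
  induction n; cbn [eps].
  - apply Rinv_0_lt_compat. pose proof (LLpos 0); lra.
  - pose proof (LLpos (S n)). apply Rdiv_lt_0_compat; lra.
Qed.

Lemma eps_LL n : eps n * LR n ^ Lnat n <= 1.
Proof.
  pose proof (LLpos n).
  destruct n; cbn [eps].
  - rewrite Rinv_l; lra.
  - assert (eps n <= 1).
    { clear H. induction n.
      - cbn [eps]. pose proof (LLpos 0). apply Rle_trans with (/1). apply Rinv_le_contravar; lra. lra.
      - cbn [eps]. pose proof (LLpos (S n)). pose proof (eps_pos n).
        unfold Rdiv. apply Rle_trans with (eps n * 1); [|lra].
        apply Rmult_le_compat_l; [lra|]. rewrite <- Rinv_1. apply Rinv_le_contravar; lra. }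
    pose proof (eps_pos n). field_simplify; lra.
Qed.

Lemma eps_le1 n : eps n <= 1.
Proof. pose proof (eps_LL n); pose proof (LLpos n); pose proof (eps_pos n); nra. Qed.

Lemma eps_step n : eps (S n) * (8 * LR (S n)) <= eps n.
Proof.
  cbn [eps]. pose proof (LL_ge (S n)). pose proof (LR_ge1 (S n)). pose proof (eps_pos n).
  unfold Rdiv. rewrite Rmult_assoc.
  apply Rle_trans with (eps n * 1); [|lra]. apply Rmult_le_compat_l; [lra|].
  apply (Rmult_le_reg_l (8 * LR (S n) ^ Lnat (S n))). nra.
  field_simplify; nra.
Qed.

Lemma eps_decr n d : eps (n + d) <= eps n.
Proof.
  induction d. rewrite Nat.add_0_r; lra.
  rewrite Nat.add_succ_r. pose proof (eps_step (n + d)). pose proof (eps_pos (S (n+d))).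
  pose proof (LR_ge1 (S (n + d))). nra.
Qed.

Lemma eps_far n m : (n < m)%nat -> eps m * (8 * LR m) <= eps n.
Proof.
  intro H. destruct m; [lia|]. pose proof (eps_step m).
  replace m with (n + (m - n))%nat in * by lia. pose proof (eps_decr n (m - n)). lra.
Qed.
Lemma cos_lip a b : Rabs (cos a - cos b) <= Rabs (a - b).
Proof.
  destruct (MVT_abs cos (fun c => - sin c) b a) as [c [Hc _]].
  { intros; apply derivable_pt_lim_cos. }
  rewrite Hc. rewrite Rabs_Ropp.
  assert (Rabs (sin c) <= 1) by (apply Rabs_le; apply SIN_bound).
  pose proof (Rabs_pos (a - b)). nra.
Qed.

Lemma sin_lip a b : Rabs (sin a - sin b) <= Rabs (a - b).
Proof.
  destruct (MVT_abs sin cos b a) as [c [Hc _]].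
  { intros; apply derivable_pt_lim_sin. }
  rewrite Hc.
  assert (Rabs (cos c) <= 1) by (apply Rabs_le; apply COS_bound).
  pose proof (Rabs_pos (a - b)). nra.
Qed.

Lemma cmod_le a b : cmod a b <= Rabs a + Rabs b.
Proof.
  unfold cmod. rewrite <- (sqrt_pow2 (Rabs a + Rabs b)).
  2: { pose proof (Rabs_pos a); pose proof (Rabs_pos b); lra. }
  apply sqrt_le_1_alt.
  pose proof (Rabs_pos a); pose proof (Rabs_pos b).
  replace (a ^ 2) with (Rabs a ^ 2) by apply pow2_abs.
  replace (b ^ 2) with (Rabs b ^ 2) by apply pow2_abs.
  nra.
Qed.

Lemma cmod_ge a b c s : c ^ 2 + s ^ 2 = 1 -> a * c + b * s <= cmod a b.
Proof.
  intro H. unfold cmod.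
  destruct (Rle_dec (a * c + b * s) 0) as [h|h].
  - pose proof (sqrt_pos (a ^ 2 + b ^ 2)); lra.
  - rewrite <- (sqrt_pow2 (a * c + b * s)) by lra.
    apply sqrt_le_1_alt.
    assert ((a*c+b*s)^2 + (a*s - b*c)^2 = (a^2+b^2)*(c^2+s^2)) by ring.
    rewrite H in H0. pose proof (pow2_ge_0 (a*s-b*c)). lra.
Qed.
Definition T (c : R) (j : nat) (x : R) := c ^ j * cos (c * x + INR j * (PI / 2)).
Definition Sn (c : R) (j : nat) (x : R) := c ^ j * sin (c * x + INR j * (PI / 2)).

Lemma dlin c t x : derivable_pt_lim (fun y => c * y + t) x c.
Proof.
  pose proof (derivable_pt_lim_plus _ _ x _ _ (derivable_pt_lim_scal id c x 1 (derivable_pt_lim_id x)) (derivable_pt_lim_const t x)) as H.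
  replace (c * 1 + 0) with c in H by ring. exact H.
Qed.

Lemma dT c j x : derivable_pt_lim (T c j) x (T c (S j) x).
Proof.
  pose proof (derivable_pt_lim_comp _ cos x _ _ (dlin c (INR j * (PI / 2)) x) (derivable_pt_lim_cos _)) as H.
  pose proof (derivable_pt_lim_scal _ (c ^ j) x _ H) as H2.
  unfold T. replace (c ^ S j * cos (c * x + INR (S j) * (PI / 2))) with (c ^ j * (- sin (c * x + INR j * (PI / 2)) * c)).
  exact H2.
  rewrite S_INR. replace (c * x + (INR j + 1) * (PI / 2)) with ((c * x + INR j * (PI / 2)) + PI/2) by ring.
  rewrite cos_plus, cos_PI2, sin_PI2. simpl. ring.
Qed.

Lemma dS c j x : derivable_pt_lim (Sn c j) x (Sn c (S j) x).
Proof.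
  pose proof (derivable_pt_lim_comp _ sin x _ _ (dlin c (INR j * (PI / 2)) x) (derivable_pt_lim_sin _)) as H.
  pose proof (derivable_pt_lim_scal _ (c ^ j) x _ H) as H2.
  unfold Sn. replace (c ^ S j * sin (c * x + INR (S j) * (PI / 2))) with (c ^ j * (cos (c * x + INR j * (PI / 2)) * c)).
  exact H2.
  rewrite S_INR. replace (c * x + (INR j + 1) * (PI / 2)) with ((c * x + INR j * (PI / 2)) + PI/2) by ring.
  rewrite sin_plus, cos_PI2, sin_PI2. simpl. ring.
Qed.

Definition a (n : nat) : R := (/ 2) ^ n.
Definition mu (n : nat) : R := lam n + eps n.
Definition tu (n j : nat) (x : R) := a n * (T (lam n) j x - T (mu n) j x).
Definition tv (n j : nat) (x : R) := a n * (Sn (lam n) j x - Sn (mu n) j x).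

Lemma powdiff l m j : 0 <= l <= m -> 1 <= m -> m ^ j - l ^ j <= INR j * (m - l) * m ^ j.
Proof.
  intros [H0 H1] H2. induction j.
  - simpl; lra.
  - rewrite S_INR. simpl pow.
    assert (0 <= l ^ j <= m ^ j) by (split; [apply pow_le; lra| apply pow_incr; lra]).
    assert (m ^ j <= m * m ^ j) by nra.
    assert (m * (m ^ j - l ^ j) <= m * (INR j * (m - l) * m ^ j)) by (apply Rmult_le_compat_l; lra).
    pose proof (pos_INR j).
    replace (m * m ^ j - l * l ^ j) with (m * (m ^ j - l ^ j) + l ^ j * (m - l)) by ring.
    nra.
Qed.

Lemma T_diff l m j x : 0 <= l <= m ->
  Rabs (T l j x - T m j x) <= (m ^ j - l ^ j) + l ^ j * ((m - l) * Rabs x).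
Proof.
  intros H. unfold T.
  set (A := l * x + INR j * (PI / 2)). set (B := m * x + INR j * (PI / 2)).
  replace (l ^ j * cos A - m ^ j * cos B) with (l ^ j * (cos A - cos B) + (l ^ j - m ^ j) * cos B) by ring.
  eapply Rle_trans; [apply Rabs_triang|].
  rewrite !Rabs_mult.
  assert (0 <= l ^ j <= m ^ j) by (split; [apply pow_le; lra| apply pow_incr; lra]).
  rewrite (Rabs_pos_eq (l ^ j)) by lra.
  rewrite (Rabs_minus_sym (l ^ j)), (Rabs_pos_eq (m ^ j - l ^ j)) by lra.
  pose proof (cos_lip A B). replace (A - B) with ((l - m) * x) in H1 by (unfold A, B; ring).
  rewrite Rabs_mult, (Rabs_minus_sym l), (Rabs_pos_eq (m - l)) in H1 by lra.
  assert (Rabs (cos B) <= 1) by (apply Rabs_le; apply COS_bound).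
  pose proof (Rabs_pos (cos B)). nra.
Qed.

Lemma S_diff l m j x : 0 <= l <= m ->
  Rabs (Sn l j x - Sn m j x) <= (m ^ j - l ^ j) + l ^ j * ((m - l) * Rabs x).
Proof.
  intros H. unfold Sn.
  set (A := l * x + INR j * (PI / 2)). set (B := m * x + INR j * (PI / 2)).
  replace (l ^ j * sin A - m ^ j * sin B) with (l ^ j * (sin A - sin B) + (l ^ j - m ^ j) * sin B) by ring.
  eapply Rle_trans; [apply Rabs_triang|].
  rewrite !Rabs_mult.
  assert (0 <= l ^ j <= m ^ j) by (split; [apply pow_le; lra| apply pow_incr; lra]).
  rewrite (Rabs_pos_eq (l ^ j)) by lra.
  rewrite (Rabs_minus_sym (l ^ j)), (Rabs_pos_eq (m ^ j - l ^ j)) by lra.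
  pose proof (sin_lip A B). replace (A - B) with ((l - m) * x) in H1 by (unfold A, B; ring).
  rewrite Rabs_mult, (Rabs_minus_sym l), (Rabs_pos_eq (m - l)) in H1 by lra.
  assert (Rabs (sin B) <= 1) by (apply Rabs_le; apply SIN_bound).
  pose proof (Rabs_pos (sin B)). nra.
Qed.

Lemma fact_pow (L : nat) j : (1 <= L)%nat -> INR L ^ j <= INR L ^ L * INR (fact j).
Proof.
  intro HL. assert (HL' : 1 <= INR L) by (apply (le_INR 1); exact HL).
  assert (Hf : forall k, 1 <= INR (fact k)) by (intro k; apply (le_INR 1); apply lt_O_fact).
  induction j.
  - simpl. pose proof (pow_R1_Rle (INR L) L HL'). lra.
  - destruct (Compare_dec.le_lt_dec (S j) L) as [h|h].
    + assert (INR L ^ S j <= INR L ^ L) by (apply Rle_pow; auto).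
      pose proof (Hf (S j)). assert (0 <= INR L ^ L) by (apply pow_le; lra). nra.
    + rewrite fact_simpl, mult_INR. simpl pow.
      assert (INR L <= INR (S j)) by (apply le_INR; lia).
      assert (0 <= INR L ^ j) by (apply pow_le; lra).
      pose proof (Hf j). assert (0 <= INR L ^ L) by (apply pow_le; lra). nra.
Qed.

Lemma lam_mu n : 0 <= lam n <= mu n /\ 1 <= mu n /\ mu n <= LR n /\ mu n - lam n = eps n.
Proof.
  unfold mu. pose proof (lam_ge1 n). pose proof (eps_pos n). pose proof (eps_le1 n).
  rewrite LR_eq. lra.
Qed.

Lemma gen_bound n j x : a n * ((mu n ^ j - lam n ^ j) + lam n ^ j * ((mu n - lam n) * Rabs x))
   <= INR (fact j) * (INR j + Rabs x) * (/ 2) ^ n.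
Proof.
  destruct (lam_mu n) as [H1 [H2 [H3 H4]]]. rewrite H4.
  pose proof (powdiff (lam n) (mu n) j H1 H2). rewrite H4 in H.
  assert (lam n ^ j <= mu n ^ j) by (apply pow_incr; lra).
  assert (mu n ^ j <= LR n ^ j) by (apply pow_incr; lra).
  pose proof (fact_pow (Lnat n) j ltac:(unfold Lnat; lia)). fold (LR n) in H5.
  pose proof (eps_LL n). pose proof (eps_pos n). pose proof (Rabs_pos x). pose proof (pos_INR j).
  assert (0 <= lam n ^ j) by (apply pow_le; lra).
  assert (Ha : 0 < a n) by (unfold a; apply pow_lt; lra).
  unfold a in *. set (q := (/2)^n) in *.
  assert (E: mu n ^ j - lam n ^ j + lam n ^ j * (eps n * Rabs x) <= eps n * mu n ^ j * (INR j + Rabs x)) by (assert (lam n ^ j * (eps n * Rabs x) <= mu n ^ j * (eps n * Rabs x)) by (apply Rmult_le_compat_r; [apply Rmult_le_pos|]; lra); nra).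
  assert (E2: eps n * mu n ^ j <= INR (fact j)).
  { apply Rle_trans with (eps n * (LR n ^ Lnat n * INR (fact j))).
    apply Rmult_le_compat_l. lra. change (INR (Lnat n)) with (LR n) in H6. lra.
    rewrite <- Rmult_assoc.
    assert (1 <= INR (fact j)) by (apply (le_INR 1); apply lt_O_fact).
    apply Rle_trans with (1 * INR (fact j)); [|lra].
    apply Rmult_le_compat_r; lra. }
  assert (0 <= eps n * mu n ^ j) by (apply Rmult_le_pos; [lra| apply pow_le; lra]).
  apply Rle_trans with (q * (eps n * mu n ^ j * (INR j + Rabs x))).
  apply Rmult_le_compat_l; lra.
  rewrite (Rmult_comm q). apply Rmult_le_compat_r; [lra|]. apply Rmult_le_compat_r; lra.
Qed.
Lemma tu_bound n j x : Rabs (tu n j x) <= INR (fact j) * (INR j + Rabs x) * (/ 2) ^ n.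
Proof.
  unfold tu. rewrite Rabs_mult. rewrite (Rabs_pos_eq (a n)) by (unfold a; apply pow_le; lra).
  eapply Rle_trans; [|apply gen_bound].
  apply Rmult_le_compat_l. unfold a; apply pow_le; lra.
  apply T_diff. apply lam_mu.
Qed.

Lemma tv_bound n j x : Rabs (tv n j x) <= INR (fact j) * (INR j + Rabs x) * (/ 2) ^ n.
Proof.
  unfold tv. rewrite Rabs_mult. rewrite (Rabs_pos_eq (a n)) by (unfold a; apply pow_le; lra).
  eapply Rle_trans; [|apply gen_bound].
  apply Rmult_le_compat_l. unfold a; apply pow_le; lra.
  apply S_diff. apply lam_mu.
Qed.

Lemma geo_sum K N : sum_f_R0 (fun n => K * (/ 2) ^ n) N = 2 * K - K * (/ 2) ^ N.
Proof.
  induction N. simpl; ring.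
  rewrite tech5, IHN. simpl pow. field.
Qed.

Lemma geo_cv K : Un_cv (fun N => sum_f_R0 (fun n => K * (/ 2) ^ n) N) (2 * K).
Proof.
  intros e He.
  destruct (Req_dec K 0) as [HK|HK].
  - exists O. intros n _. rewrite geo_sum, HK. unfold Rdist. rewrite Rabs_right; lra.
  - assert (Hk : 0 < Rabs K) by (apply Rabs_pos_lt; auto).
    destruct (pow_lt_1_zero (/ 2) ltac:(rewrite Rabs_right; lra) (e / Rabs K) ltac:(apply Rdiv_lt_0_compat; lra)) as [N HN].
    exists N. intros n Hn. rewrite geo_sum. unfold Rdist.
    replace (2 * K - K * (/ 2) ^ n - 2 * K) with (- (K * (/2)^n)) by ring.
    rewrite Rabs_Ropp, Rabs_mult. specialize (HN n Hn).
    apply (Rmult_lt_compat_l (Rabs K)) in HN; [|lra].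
    replace (Rabs K * (e / Rabs K)) with e in HN by (field; lra). exact HN.
Qed.

Lemma series_cv (t : nat -> R) (K : R) : (forall n, Rabs (t n) <= K * (/ 2) ^ n) ->
  {l : R | Un_cv (fun N => sum_f_R0 t N) l}.
Proof.
  intro H. apply cv_cauchy_2, cauchy_abs, cv_cauchy_1.
  apply (Rseries_CV_comp _ (fun n => K * (/ 2) ^ n)).
  - intro n; split; [apply Rabs_pos | apply H].
  - exists (2 * K); apply geo_cv.
Qed.

Lemma tail_bound t K l N : (forall n, Rabs (t n) <= K * (/ 2) ^ n) ->
  Un_cv (fun M => sum_f_R0 t M) l -> Rabs (l - sum_f_R0 t N) <= K * (/ 2) ^ N.
Proof.
  intros H Hl.
  pose proof (sum_maj1 (fun n _ => t n) (fun n => K * (/ 2) ^ n) 0 l (2 * K) N Hl (geo_cv K) H) as H2.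
  rewrite geo_sum in H2. unfold SP in H2. replace (2 * K - (2 * K - K * (/ 2) ^ N)) with (K * (/2)^N) in H2 by ring.
  exact H2.
Qed.

Lemma lim_abs t K l : (forall n, Rabs (t n) <= K * (/ 2) ^ n) ->
  Un_cv (fun M => sum_f_R0 t M) l -> Rabs l <= 2 * K.
Proof.
  intros H Hl. pose proof (tail_bound t K l 0 H Hl). pose proof (H O).
  simpl sum_f_R0 in H0. simpl pow in *.
  replace l with ((l - t O) + t O) by ring.
  eapply Rle_trans; [apply Rabs_triang|]. lra.
Qed.

Lemma lim_ge U l b n : Un_cv U l -> (forall N, (n <= N)%nat -> b <= U N) -> b <= l.
Proof.
  intros Hl H. destruct (Rle_dec b l) as [h|h]; auto.
  destruct (Hl (b - l)) as [N HN]; [lra|].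
  specialize (HN (max N n) ltac:(lia)). specialize (H (max N n) ltac:(lia)).
  unfold Rdist in HN. apply Rabs_def2 in HN. lra.
Qed.

Definition Kb (j : nat) (x : R) := INR (fact j) * (INR j + Rabs x).

Definition Du (j : nat) (x : R) : R :=
  proj1_sig (series_cv (fun n => tu n j x) (Kb j x) (fun n => tu_bound n j x)).
Definition Dv (j : nat) (x : R) : R :=
  proj1_sig (series_cv (fun n => tv n j x) (Kb j x) (fun n => tv_bound n j x)).

Lemma Du_cv j x : Un_cv (fun N => sum_f_R0 (fun n => tu n j x) N) (Du j x).
Proof. unfold Du. destruct series_cv; simpl; auto. Qed.
Lemma Dv_cv j x : Un_cv (fun N => sum_f_R0 (fun n => tv n j x) N) (Dv j x).
Proof. unfold Dv. destruct series_cv; simpl; auto. Qed.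

Lemma dtu n j x : derivable_pt_lim (tu n j) x (tu n (S j) x).
Proof.
  pose proof (derivable_pt_lim_scal _ (a n) x _ (derivable_pt_lim_minus _ _ x _ _ (dT (lam n) j x) (dT (mu n) j x))).
  exact H.
Qed.
Lemma dtv n j x : derivable_pt_lim (tv n j) x (tv n (S j) x).
Proof.
  pose proof (derivable_pt_lim_scal _ (a n) x _ (derivable_pt_lim_minus _ _ x _ _ (dS (lam n) j x) (dS (mu n) j x))).
  exact H.
Qed.

Lemma dsum (t : nat -> nat -> R -> R) (ht : forall n j x, derivable_pt_lim (t n j) x (t n (S j) x)) j N x :
  derivable_pt_lim (fun y => sum_f_R0 (fun n => t n j y) N) x (sum_f_R0 (fun n => t n (S j) x) N).
Proof.
  induction N.
  - simpl. apply ht.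
  - simpl. exact (derivable_pt_lim_plus _ _ x _ _ IHN (ht (S N) j x)).
Qed.

Lemma deriv_gen (t : nat -> nat -> R -> R) (D : nat -> R -> R)
  (ht : forall n j x, derivable_pt_lim (t n j) x (t n (S j) x))
  (hb : forall n j x, Rabs (t n j x) <= Kb j x * (/ 2) ^ n)
  (hc : forall j x, Un_cv (fun N => sum_f_R0 (fun n => t n j x) N) (D j x)) j x :
  derivable_pt_lim (D j) x (D (S j) x).
Proof.
  apply (CVU_derivable (fun N y => sum_f_R0 (fun n => t n j y) N)
                       (fun N y => sum_f_R0 (fun n => t n (S j) y) N)
                       (D j) (D (S j)) x (mkposreal 1 Rlt_0_1)).
  - intros e He.
    set (K' := INR (fact (S j)) * (INR (S j) + Rabs x + 1)).
    assert (HK' : 0 < K').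
    { unfold K'. apply Rmult_lt_0_compat. apply INR_fact_lt_0. pose proof (pos_INR (S j)); pose proof (Rabs_pos x); lra. }
    destruct (pow_lt_1_zero (/ 2) ltac:(rewrite Rabs_right; lra) (e / K') ltac:(apply Rdiv_lt_0_compat; lra)) as [N HN].
    exists N. intros n y Hn Hy. unfold Boule in Hy; simpl in Hy.
    assert (Hy' : Rabs y <= Rabs x + 1).
    { replace y with ((y - x) + x) by ring. eapply Rle_trans; [apply Rabs_triang|]. lra. }
    assert (Hbd : forall m, Rabs (t m (S j) y) <= K' * (/ 2) ^ m).
    { intro m. eapply Rle_trans; [apply hb|]. apply Rmult_le_compat_r. apply pow_le; lra.
      unfold Kb, K'. apply Rmult_le_compat_l. apply pos_INR. lra. }
    pose proof (tail_bound _ K' _ n Hbd (hc (S j) y)).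
    eapply Rle_lt_trans; [exact H|].
    specialize (HN n Hn). rewrite Rabs_right in HN by (apply Rle_ge, pow_le; lra).
    apply (Rmult_lt_compat_l K') in HN; [|lra].
    replace (K' * (e / K')) with e in HN by (field; lra). exact HN.
  - intros y _. apply hc.
  - intros n y _. apply dsum. exact ht.
  - unfold Boule. simpl. rewrite Rminus_diag, Rabs_R0. lra.
Qed.

Lemma Du_deriv j x : derivable_pt_lim (Du j) x (Du (S j) x).
Proof. apply (deriv_gen tu Du dtu tu_bound Du_cv). Qed.
Lemma Dv_deriv j x : derivable_pt_lim (Dv j) x (Dv (S j) x).
Proof. apply (deriv_gen tv Dv dtv tv_bound Dv_cv). Qed.

Lemma a_lam m : a m * lam m = 8 ^ m.
Proof. unfold a, lam. rewrite <- Rpow_mult_distr. f_equal. field. Qed.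

Lemma a_pos m : 0 < a m.
Proof. unfold a; apply pow_lt; lra. Qed.

Lemma a_le1 m : a m <= 1.
Proof. unfold a. induction m; simpl; [lra|]. pose proof (pow_lt (/2) m ltac:(lra)). lra. Qed.

Lemma pow8 n : INR n + 1 <= 8 ^ n.
Proof. induction n; [simpl; lra|]. rewrite S_INR. simpl pow. pose proof (pow_R1_Rle 8 n ltac:(lra)). lra. Qed.

Lemma tech5' (f : nat -> R) k : (0 < k)%nat -> sum_f_R0 f k = sum_f_R0 f (pred k) + f k.
Proof. intro H. destruct k; [lia|]. reflexivity. Qed.

Section Low.
Variable n : nat.
Let xn := PI / eps n.
Let th := lam n * xn + INR 1 * (PI / 2).
Definition proj (m : nat) := tu m 1 xn * cos th + tv m 1 xn * sin th.

Lemma proj_abs m : Rabs (proj m) <= Rabs (tu m 1 xn) + Rabs (tv m 1 xn).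
Proof.
  unfold proj. eapply Rle_trans; [apply Rabs_triang|]. rewrite !Rabs_mult.
  assert (Rabs (cos th) <= 1) by (apply Rabs_le; apply COS_bound).
  assert (Rabs (sin th) <= 1) by (apply Rabs_le; apply SIN_bound).
  pose proof (Rabs_pos (tu m 1 xn)). pose proof (Rabs_pos (tv m 1 xn)).
  pose proof (Rabs_pos (cos th)). pose proof (Rabs_pos (sin th)). nra.
Qed.

Lemma proj_n : proj n = 8 ^ n * 2 + a n * eps n.
Proof.
  assert (Hm : mu n * xn + INR 1 * (PI / 2) = th + PI).
  { unfold th, xn, mu. pose proof (eps_pos n). field. lra. }
  unfold proj, tu, tv, T, Sn. rewrite Hm. fold th. rewrite neg_cos, neg_sin.
  pose proof (sin2_cos2 th). unfold Rsqr in H. rewrite <- a_lam. unfold mu.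
  simpl pow. replace (a n * (lam n * 1 * cos th - (lam n + eps n) * 1 * - cos th) * cos th +
   a n * (lam n * 1 * sin th - (lam n + eps n) * 1 * - sin th) * sin th) with
   (a n * (2 * lam n + eps n) * (sin th * sin th + cos th * cos th)) by ring.
  rewrite H. ring.
Qed.

Lemma tu_crude m x : Rabs (tu m 1 x) <= 3 * 8 ^ m.
Proof.
  unfold tu, T. rewrite Rabs_mult, Rabs_pos_eq by (pose proof (a_pos m); lra).
  destruct (lam_mu m) as [[H0 H1] [H2 [H3 H4]]]. rewrite LR_eq in H3.
  simpl pow. rewrite !Rmult_1_r.
  eapply Rle_trans. apply Rmult_le_compat_l. pose proof (a_pos m); lra.
  eapply Rle_trans; [apply Rabs_triang|]. rewrite Rabs_Ropp, !Rabs_mult.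
  rewrite (Rabs_pos_eq (lam m)), (Rabs_pos_eq (mu m)) by lra.
  assert (Rabs (cos (lam m * x + INR 1 * (PI / 2))) <= 1) by (apply Rabs_le; apply COS_bound).
  assert (Rabs (cos (mu m * x + INR 1 * (PI / 2))) <= 1) by (apply Rabs_le; apply COS_bound).
  pose proof (Rabs_pos (cos (lam m * x + INR 1 * (PI / 2)))).
  pose proof (Rabs_pos (cos (mu m * x + INR 1 * (PI / 2)))).
  assert (lam m * Rabs (cos (lam m * x + INR 1 * (PI / 2))) + mu m * Rabs (cos (mu m * x + INR 1 * (PI / 2))) <= 2 * lam m + 1) by nra.
  exact H8.
  pose proof (a_lam m). pose proof (a_le1 m). pose proof (pow_R1_Rle 8 m ltac:(lra)). pose proof (a_pos m). nra.
Qed.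
Lemma tv_crude m x : Rabs (tv m 1 x) <= 3 * 8 ^ m.
Proof.
  unfold tv, Sn. rewrite Rabs_mult, Rabs_pos_eq by (pose proof (a_pos m); lra).
  destruct (lam_mu m) as [[H0 H1] [H2 [H3 H4]]]. rewrite LR_eq in H3.
  simpl pow. rewrite !Rmult_1_r.
  eapply Rle_trans. apply Rmult_le_compat_l. pose proof (a_pos m); lra.
  eapply Rle_trans; [apply Rabs_triang|]. rewrite Rabs_Ropp, !Rabs_mult.
  rewrite (Rabs_pos_eq (lam m)), (Rabs_pos_eq (mu m)) by lra.
  assert (Rabs (sin (lam m * x + INR 1 * (PI / 2))) <= 1) by (apply Rabs_le; apply SIN_bound).
  assert (Rabs (sin (mu m * x + INR 1 * (PI / 2))) <= 1) by (apply Rabs_le; apply SIN_bound).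
  pose proof (Rabs_pos (sin (lam m * x + INR 1 * (PI / 2)))).
  pose proof (Rabs_pos (sin (mu m * x + INR 1 * (PI / 2)))).
  assert (lam m * Rabs (sin (lam m * x + INR 1 * (PI / 2))) + mu m * Rabs (sin (mu m * x + INR 1 * (PI / 2))) <= 2 * lam m + 1) by nra.
  exact H8.
  pose proof (a_lam m). pose proof (a_le1 m). pose proof (pow_R1_Rle 8 m ltac:(lra)). pose proof (a_pos m). nra.
Qed.

Lemma proj_lt m : proj m >= - (6 * 8 ^ m).
Proof.
  pose proof (proj_abs m). pose proof (tu_crude m xn). pose proof (tv_crude m xn).
  pose proof (Rle_abs (- proj m)) as H2. rewrite Rabs_Ropp in H2. lra.
Qed.

Lemma far_small m : (n < m)%nat -> eps m + lam m * (eps m * Rabs xn) <= 1.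
Proof.
  intro Hm. pose proof (eps_far n m Hm). rewrite LR_eq in H.
  pose proof (eps_pos n). pose proof (eps_pos m). pose proof (eps_le1 n). pose proof (lam_ge1 m).
  pose proof PI_4. pose proof PI_RGT_0.
  assert (Hx : Rabs xn = PI / eps n) by (unfold xn; apply Rabs_pos_eq; apply Rlt_le, Rdiv_lt_0_compat; lra).
  rewrite Hx.
  assert (lam m * eps m <= eps n / 8) by lra.
  assert (lam m * (eps m * (PI / eps n)) <= (eps n / 8) * (PI / eps n)).
  { rewrite <- Rmult_assoc. apply Rmult_le_compat_r; [apply Rlt_le, Rdiv_lt_0_compat; lra| lra]. }
  replace (eps n / 8 * (PI / eps n)) with (PI / 8) in H7 by (field; lra).
  assert (0 <= eps m * lam m) by (apply Rmult_le_pos; lra). lra.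
Qed.

Lemma proj_gt m : (n < m)%nat -> proj m >= - (2 * a m).
Proof.
  intro Hm. pose proof (proj_abs m). pose proof (far_small m Hm).
  destruct (lam_mu m) as [Hlm [_ [_ He]]].
  assert (Rabs (tu m 1 xn) <= a m).
  { unfold tu. rewrite Rabs_mult, (Rabs_pos_eq (a m)) by (pose proof (a_pos m); lra).
    pose proof (T_diff _ _ 1 xn Hlm). rewrite He in H1. simpl pow in H1.
    pose proof (a_pos m). 
    apply Rle_trans with (a m * 1); [|lra]. apply Rmult_le_compat_l; [lra|].
    replace (mu m * 1 - lam m * 1) with (eps m) in H1 by lra. lra. }
  assert (Rabs (tv m 1 xn) <= a m).
  { unfold tv. rewrite Rabs_mult, (Rabs_pos_eq (a m)) by (pose proof (a_pos m); lra).
    pose proof (S_diff _ _ 1 xn Hlm). rewrite He in H2. simpl pow in H2.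
    pose proof (a_pos m). 
    apply Rle_trans with (a m * 1); [|lra]. apply Rmult_le_compat_l; [lra|].
    replace (mu m * 1 - lam m * 1) with (eps m) in H2 by lra. lra. }
  pose proof (Rle_abs (- proj m)) as H3. rewrite Rabs_Ropp in H3. lra.
Qed.

Lemma sumA N : (N < n)%nat -> sum_f_R0 proj N >= - (6 / 7) * (8 ^ S N - 1).
Proof.
  induction N; intro H.
  - simpl. pose proof (proj_lt 0). simpl in H0. lra.
  - rewrite tech5. pose proof (proj_lt (S N)). specialize (IHN ltac:(lia)).
    simpl pow in *. lra.
Qed.

Lemma sumB d : sum_f_R0 proj (n + d) >= 2 * 8 ^ n - (6 / 7) * (8 ^ n - 1) - 2 + 2 * (/ 2) ^ (n + d).
Proof.
  induction d.
  - rewrite Nat.add_0_r. pose proof (a_le1 n). unfold a in H.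
    pose proof (proj_n). pose proof (a_pos n). pose proof (eps_pos n).
    assert (0 <= a n * eps n) by (apply Rmult_le_pos; lra).
    destruct (Nat.eq_dec n 0) as [E|E].
    + rewrite E in H, H0, H3 |- *. simpl sum_f_R0. simpl pow in *. lra.
    + rewrite (tech5' proj n) by lia. pose proof (sumA (pred n) ltac:(lia)).
      replace (S (pred n)) with n in H4 by lia. lra.
  - rewrite Nat.add_succ_r, tech5. pose proof (proj_gt (S (n + d)) ltac:(lia)).
    unfold a in H. simpl pow in *. lra.
Qed.

Lemma sum_lb N : (n <= N)%nat -> 8 ^ n - 2 <= sum_f_R0 proj N.
Proof.
  intro H. replace N with (n + (N - n))%nat by lia. pose proof (sumB (N - n)).
  pose proof (pow_lt (/2) (n + (N - n)) ltac:(lra)). pose proof (pow_R1_Rle 8 n ltac:(lra)). lra.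
Qed.

Lemma proj_sum N : sum_f_R0 proj N =
  sum_f_R0 (fun m => tu m 1 xn) N * cos th + sum_f_R0 (fun m => tv m 1 xn) N * sin th.
Proof. induction N; simpl; [unfold proj; ring|]. rewrite IHN. unfold proj. ring. Qed.

Lemma cv_const c : Un_cv (fun _ : nat => c) c.
Proof. intros e He. exists O. intros. unfold Rdist. rewrite Rminus_diag, Rabs_R0. lra. Qed.

Lemma lower : 8 ^ n - 2 <= cmod (Du 1 xn) (Dv 1 xn).
Proof.
  eapply Rle_trans; [|apply (cmod_ge _ _ (cos th) (sin th))].
  - apply (lim_ge (fun N => sum_f_R0 (fun m => tu m 1 xn) N * cos th + sum_f_R0 (fun m => tv m 1 xn) N * sin th) _ _ n).
    + apply CV_plus; apply CV_mult; try apply cv_const. apply Du_cv. apply Dv_cv.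
    + intros N HN. rewrite <- proj_sum. apply sum_lb; auto.
  - pose proof (sin2_cos2 th). unfold Rsqr in H. simpl. lra.
Qed.

End Low.

Definition ent (n : nat) : list (R * R * R) :=
  (lam n / (2 * PI), a n, 0) :: (mu n / (2 * PI), - a n, 0) :: nil.
Fixpoint lst (N : nat) : list (R * R * R) :=
  match N with O => ent O | S k => ent (S k) ++ lst k end.

Lemma re_app l1 l2 x : trig_re (l1 ++ l2) x = trig_re l1 x + trig_re l2 x.
Proof. unfold trig_re. induction l1 as [|[[xi p] q] l IH]; simpl; [ring| rewrite IH; ring]. Qed.
Lemma im_app l1 l2 x : trig_im (l1 ++ l2) x = trig_im l1 x + trig_im l2 x.
Proof. unfold trig_im. induction l1 as [|[[xi p] q] l IH]; simpl; [ring| rewrite IH; ring]. Qed.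

Lemma twopi c x : 2 * PI * (c / (2 * PI)) * x = c * x.
Proof. pose proof PI_neq0. field. auto. Qed.

Lemma re_ent n x : trig_re (ent n) x = tu n 0 x.
Proof. unfold trig_re, ent, tu, T. simpl. rewrite !twopi, !Rmult_0_l, !Rplus_0_r. ring. Qed.
Lemma im_ent n x : trig_im (ent n) x = tv n 0 x.
Proof. unfold trig_im, ent, tv, Sn. simpl. rewrite !twopi, !Rmult_0_l, !Rplus_0_r. ring. Qed.

Lemma re_lst N x : trig_re (lst N) x = sum_f_R0 (fun n => tu n 0 x) N.
Proof. induction N; [apply re_ent|]. change (lst (S N)) with (ent (S N) ++ lst N). rewrite re_app, re_ent, IHN, tech5. ring. Qed.
Lemma im_lst N x : trig_im (lst N) x = sum_f_R0 (fun n => tv n 0 x) N.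
Proof. induction N; [apply im_ent|]. change (lst (S N)) with (ent (S N) ++ lst N). rewrite im_app, im_ent, IHN, tech5. ring. Qed.

Lemma tu0 n x : Rabs (tu n 0 x) <= 2 * (/ 2) ^ n.
Proof.
  unfold tu, T. simpl pow. rewrite Rabs_mult, (Rabs_pos_eq (a n)) by (pose proof (a_pos n); lra).
  unfold a. rewrite Rmult_comm. apply Rmult_le_compat_r. apply pow_le; lra.
  eapply Rle_trans; [apply Rabs_triang|]. rewrite Rabs_Ropp, !Rabs_mult, Rabs_R1.
  pose proof (COS_bound (lam n * x + INR 0 * (PI / 2))). pose proof (COS_bound (mu n * x + INR 0 * (PI / 2))).
  apply Rabs_le in H. apply Rabs_le in H0. lra.
Qed.
Lemma tv0 n x : Rabs (tv n 0 x) <= 2 * (/ 2) ^ n.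
Proof.
  unfold tv, Sn. simpl pow. rewrite Rabs_mult, (Rabs_pos_eq (a n)) by (pose proof (a_pos n); lra).
  unfold a. rewrite Rmult_comm. apply Rmult_le_compat_r. apply pow_le; lra.
  eapply Rle_trans; [apply Rabs_triang|]. rewrite Rabs_Ropp, !Rabs_mult, Rabs_R1.
  pose proof (SIN_bound (lam n * x + INR 0 * (PI / 2))). pose proof (SIN_bound (mu n * x + INR 0 * (PI / 2))).
  apply Rabs_le in H. apply Rabs_le in H0. lra.
Qed.

Lemma ap : almost_periodic (Du 0) (Dv 0).
Proof.
  intros e He.
  destruct (pow_lt_1_zero (/ 2) ltac:(rewrite Rabs_right; lra) (e / 4) ltac:(lra)) as [N HN].
  exists (lst N). intro x. rewrite re_lst, im_lst.
  eapply Rle_trans; [apply cmod_le|].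
  pose proof (tail_bound _ 2 _ N (fun n => tu0 n x) (Du_cv 0 x)).
  pose proof (tail_bound _ 2 _ N (fun n => tv0 n x) (Dv_cv 0 x)).
  specialize (HN N (le_n N)). rewrite Rabs_right in HN by (apply Rle_ge, pow_le; lra). lra.
Qed.

Lemma fact_Rp j s : 1 < s -> INR (fact j) <= Rpower (INR (fact j)) s.
Proof.
  intro Hs. assert (1 <= INR (fact j)) by (apply (le_INR 1); apply lt_O_fact).
  rewrite <- (Rpower_1 (INR (fact j))) at 1 by lra.
  apply Rle_Rpower; lra.
Qed.

Lemma gev s : s > 1 -> gevrey s Du Dv.
Proof.
  intros Hs K HK. destruct (compact_P1 K HK) as [m [M Hb]].
  set (R0 := Rabs m + Rabs M).
  assert (HR : 0 <= R0) by (unfold R0; pose proof (Rabs_pos m); pose proof (Rabs_pos M); lra).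
  exists (8 * (1 + R0)). split; [lra|].
  intros j x Hx. specialize (Hb x Hx).
  assert (Hxr : Rabs x <= R0).
  { unfold R0. unfold Rabs. destruct (Rcase_abs x), (Rcase_abs m), (Rcase_abs M); lra. }
  pose proof (lim_abs _ _ _ (fun n => tu_bound n j x) (Du_cv j x)) as H1.
  pose proof (lim_abs _ _ _ (fun n => tv_bound n j x) (Dv_cv j x)) as H2.
  pose proof (cmod_le (Du j x) (Dv j x)) as H3.
  pose proof (fact_Rp j s Hs) as H4.
  assert (Hf : 1 <= INR (fact j)) by (apply (le_INR 1); apply lt_O_fact).
  pose proof (pow8 j) as H5. pose proof (pos_INR j) as H6.
  assert (H7 : 8 ^ j <= (8 * (1 + R0)) ^ j) by (apply pow_incr; lra).
  assert (H8 : INR j + R0 <= (1 + R0) * (8 * (1 + R0)) ^ j) by nra.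
  set (P := (8 * (1 + R0)) ^ j) in *.
  change ((8 * (1 + R0)) ^ S j) with (8 * (1 + R0) * P).
  assert (H9 : cmod (Du j x) (Dv j x) <= 4 * INR (fact j) * (INR j + R0)) by nra.
  assert (H10 : 4 * (INR j + R0) <= 8 * (1 + R0) * P) by nra.
  assert (0 <= 8 * (1 + R0) * P) by lra.
  apply Rle_trans with (8 * (1 + R0) * P * INR (fact j)).
  nra.
  apply Rmult_le_compat_l; lra.
Qed.

Theorem mainTheorem1 (s : R) (hs : s > 1) :
  exists (u v : R -> R) (Du Dv : nat -> R -> R),
    derivs_of u Du /\ derivs_of v Dv /\
    almost_periodic u v /\
    gevrey s Du Dv /\
    ~ (exists B C : R, B > 0 /\ C > 0 /\
         forall (j : nat) (x : R),
           cmod (Du j x) (Dv j x) <= B * C ^ j * Rpower (INR (fact j)) s).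
Proof.
  exists (Du 0), (Dv 0), Du, Dv.
  split; [split; [intro; reflexivity| intros; apply Du_deriv]|].
  split; [split; [intro; reflexivity| intros; apply Dv_deriv]|].
  split; [apply ap|]. split; [apply gev; exact hs|].
  intros [B [C [HB [HC H]]]].
  destruct (Pow_x_infinity 8 ltac:(rewrite Rabs_right; lra) (B * C + 3)) as [N HN].
  specialize (HN N (le_n N)). rewrite Rabs_right in HN by (apply Rle_ge, pow_le; lra).
  pose proof (lower N). specialize (H 1%nat (PI / eps N)).
  assert (E : Rpower (INR (fact 1)) s = 1).
  { simpl. unfold Rpower. rewrite ln_1, Rmult_0_r, exp_0. reflexivity. }
  rewrite E in H. simpl pow in H. lra.
Qed.
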